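(* Let $g_1,\dots,g_N\in\mathbb{C}^K$ be nonzero, $w_1,\dots,w_N\ge0$, and let $\mathrm{WFP}$ and $\mathrm{WFC}$ be as defined in the context. Let $\mathcal{N}$ be partitioned into disjoint sets $\mathcal{S}_1,\dots,\mathcal{S}_L$ and fix integers $0\le r_i\le|\mathcal{S}_i|$, not all zero. Let $\mathcal{R}^\ast$ be the output of the JGS algorithm run with cost $\mathcal{C}=\mathrm{WFC}$ and cardinality requirements $|\mathcal{R}\cap\mathcal{S}_i|=r_i$, and set $\mathcal{T}^\ast=\mathcal{N}\setminus\mathcal{R}^\ast$. Let $\mathcal{T}_{OPT}$ minimize $\mathrm{WFP}(\mathcal{T})$ over all $\mathcal{T}\subseteq\mathcal{N}$ with $|\mathcal{T}\cap\mathcal{S}_i|=|\mathcal{S}_i|-r_i$ for all $i$, and suppose $\mathrm{WFP}(\mathcal{T}_{OPT})>0$. Then $$\mathrm{WFP}(\mathcal{T}^\ast)\le\frac12\Big(1+\frac{\mathrm{WFP}(\mathcal{N})}{\mathrm{WFP}(\mathcal{T}_{OPT})}\Big)\mathrm{WFP}(\mathcal{T}_{OPT}).$$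
   Context: $\mathrm{WFP}(\mathcal{S})=\sum_{i,j\in\mathcal{S}}w_iw_j\frac{|\langle g_i,g_j\rangle|^2}{\|g_i\|_2^2\|g_j\|_2^2}$ (weighted frame potential) and $\mathrm{WFC}(\mathcal{T})=\mathrm{WFP}(\mathcal{N})-\mathrm{WFP}(\mathcal{N}\setminus\mathcal{T})$ (weighted frame cost). The JGS algorithm for cost $\mathcal{C}$ and requirements $r_i$: start with $\mathcal{R}=\varnothing$; for $\sum_i r_i$ iterations, form $\mathcal{R}^c=\bigcup_{i:\,|\mathcal{R}\cap\mathcal{S}_i|<r_i}(\mathcal{S}_i\setminus\mathcal{R})$, choose $t^\ast\in\arg\max_{t\in\mathcal{R}^c}\mathcal{C}(\mathcal{R}\cup\{t\})$, and set $\mathcal{R}\leftarrow\mathcal{R}\cup\{t^\ast\}$; output the final $\mathcal{R}$. (In the paper's use, $\mathcal{T}^\ast$ is the set of sensors actually kept.) *)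

(* Defs.v *)
From HB Require Import structures.
From mathcomp Require Import all_boot all_order all_algebra.
From mathcomp Require Import complex.
From mathcomp Require Import reals.
Set Implicit Arguments. Unset Strict Implicit. Unset Printing Implicit Defensive.
Import Order.TTheory GRing.Theory Num.Theory.
Local Open Scope ring_scope.

Section WFPdefs.
Variables (R : realType) (N K : nat).
Implicit Types (z : R[i]).

Definition csqabs z : R := (complex.Re z) ^+ 2 + (complex.Im z) ^+ 2.

Definition cinner (u v : 'cV[R[i]]_K) : R[i] :=
  \sum_(k < K) u k 0 * conjc (v k 0).

Definition csqnorm (u : 'cV[R[i]]_K) : R := \sum_(k < K) csqabs (u k 0).

Variables (g : 'I_N -> 'cV[R[i]]_K) (w : 'I_N -> R).

Definition WFP (S : {set 'I_N}) : R :=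
  \sum_(i in S) \sum_(j in S)
     w i * w j * csqabs (cinner (g i) (g j)) / (csqnorm (g i) * csqnorm (g j)).

Definition WFC (T : {set 'I_N}) : R := WFP setT - WFP (~: T).
End WFPdefs.

Section JGS.
Variables (R : realType) (N L : nat).
Variables (C : {set 'I_N} -> R) (S : 'I_L -> {set 'I_N}) (r : 'I_L -> nat).

Definition JGS_cand (Rs : {set 'I_N}) : {set 'I_N} :=
  \bigcup_(l | (#|Rs :&: S l| < r l)%N) (S l :\: Rs).

(* Rout is a possible output of the JGS algorithm (with any tie-breaking in
   the argmax): s is the sequence of chosen elements (in order), of length sum_i r_i,
   each element tk, chosen after the prefix s1 has been selected, is from the candidate set and maximizing C(R u {t}). *)
Definition JGS_output (Rout : {set 'I_N}) : Prop :=
  exists s : seq 'I_N,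
    [/\ size s = (\sum_(l < L) r l)%N,
        (forall (s1 s2 : seq 'I_N) (tk : 'I_N), s = s1 ++ tk :: s2 ->
           let Rk := [set x in s1] in
           tk \in JGS_cand Rk /\
           (forall t, t \in JGS_cand Rk -> C (Rk :|: [set t]) <= C (Rk :|: [set tk])))
      & Rout = [set x in s]].
End JGS.

(* Main.v *)
Require Import Defs.
From HB Require Import structures.
From mathcomp Require Import all_boot all_order all_algebra.
From mathcomp Require Import complex reals.
From mathcomp Require Import ring lra zify.

Import Order.TTheory GRing.Theory Num.Theory.
Local Open Scope ring_scope.

Lemma avg_le (R : realFieldType) (I J : finType) (A : {set I}) (B : {set J})
  (x : I -> R) (y : J -> R) :
  (#|A| <= #|B|)%N -> (forall i j, i \in A -> j \in B -> x i <= y j) ->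
  (forall i, i \in A -> 0 <= x i) -> (forall j, j \in B -> 0 <= y j) ->
  \sum_(i in A) x i <= \sum_(j in B) y j.
Proof.
move=> hc hxy hx hy.
have Gge : 0 <= \sum_(j in B) y j by apply: sumr_ge0.
have Xge : 0 <= \sum_(i in A) x i by apply: sumr_ge0.
case: (posnP #|A|) => [A0|Apos].
  rewrite (big_pred0 _ _ _ _ (card0_eq A0)) //.
have h1 : (\sum_(i in A) x i) * #|B|%:R <= #|A|%:R * \sum_(j in B) y j.
  have -> : (\sum_(i in A) x i) * #|B|%:R = \sum_(i in A) \sum_(j in B) x i.
    by rewrite mulr_suml; apply: eq_bigr => i _; rewrite sumr_const mulr_natr.
  have -> : #|A|%:R * (\sum_(j in B) y j) = \sum_(i in A) \sum_(j in B) y j.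
    by rewrite sumr_const mulrC mulr_natr.
  apply: ler_sum => i hi; apply: ler_sum => j hj; exact: hxy.
have h2 : (\sum_(i in A) x i) * #|A|%:R <= (\sum_(i in A) x i) * #|B|%:R.
  by apply: ler_wpM2l => //; rewrite ler_nat.
have hA : (0 : R) < #|A|%:R by rewrite ltr0n.
rewrite -(ler_pM2r hA); have := le_trans h2 h1; lra.
Qed.

Section Greedy.
Variables (R : realType) (N L : nat) (F : {set 'I_N} -> R)
  (S : 'I_L -> {set 'I_N}) (r : 'I_L -> nat).
Hypothesis submod : forall A B, F (A :|: B) + F (A :&: B) <= F A + F B.
Hypothesis mono : forall A B : {set 'I_N}, A \subset B -> F A <= F B.
Hypothesis disj : forall l1 l2, l1 != l2 -> [disjoint S l1 & S l2].
Hypothesis cover : \bigcup_(l < L) S l = [set: 'I_N].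

Lemma same_group {x l1 l2} : x \in S l1 -> x \in S l2 -> l1 = l2.
Proof.
move=> h1 h2; apply/eqP; apply: contraT => hne.
by rewrite (disjointFr (disj l1 l2 hne) h1) in h2.
Qed.

Lemma ind1 (x : 'I_N) : \sum_(l < L) ((x \in S l)%:R : R) = 1.
Proof.
have : x \in \bigcup_(l < L) S l by rewrite cover inE.
case/bigcupP => l0 _ hx0.
rewrite (bigD1 l0) //= hx0 big1 ?addr0 // => l hl.
case hxl: (x \in S l) => //.
by rewrite (same_group hxl hx0) eqxx in hl.
Qed.

Lemma split_groups (I : finType) (P : pred I) (h : I -> 'I_N) (f : I -> R) :
  \sum_(i | P i) f i = \sum_(l < L) \sum_(i | P i && (h i \in S l)) f i.
Proof.
transitivity (\sum_(i | P i) \sum_(l < L) ((h i \in S l)%:R * f i)).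
  by apply: eq_bigr => i _; rewrite -mulr_suml ind1 mul1r.
rewrite exchange_big /=; apply: eq_bigr => l _.
rewrite [RHS]big_mkcondr /=; apply: eq_bigr => i _.
by case: (h i \in S l); rewrite ?mul1r ?mul0r.
Qed.

Lemma D1 (A B : {set 'I_N}) (o : 'I_N) : A \subset B ->
  F (B :|: [set o]) - F B <= F (A :|: [set o]) - F A.
Proof.
move=> sAB.
have := submod (A :|: [set o]) B.
rewrite setUAC (setUidPr sAB).
have : F A <= F ((A :|: [set o]) :&: B).
  by apply: mono; rewrite subsetI subsetUl sAB.
lra.
Qed.

Lemma D2 (A : {set 'I_N}) (s : seq 'I_N) :
  F (A :|: [set x in s]) <= F A + \sum_(o <- s) (F (A :|: [set o]) - F A).
Proof.
elim: s => [|x s IH].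
  rewrite big_nil addr0; have -> : [set x in [::]] = set0 :> {set 'I_N}.
    by apply/setP => y; rewrite !inE.
  by rewrite setU0.
have -> : A :|: [set y in x :: s] = (A :|: [set y in s]) :|: [set x].
  by apply/setP => y; rewrite !inE ?in_cons -orbA [(y == x) || _]orbC.
rewrite big_cons.
have := D1 _ _ x (subsetUl A [set y in s]).
lra.
Qed.

Lemma D2' (A X : {set 'I_N}) :
  F (A :|: X) <= F A + \sum_(o in X) (F (A :|: [set o]) - F A).
Proof. by have := D2 A (enum X); rewrite set_enum big_enum. Qed.

Lemma nat_sum_eq (a b : 'I_L -> nat) : (forall l, (a l <= b l)%N) ->
  (\sum_(l < L) a l = \sum_(l < L) b l)%N -> forall l, a l = b l.
Proof.
move=> hle hs l; apply/eqP; rewrite eqn_leq hle /=; apply: contraT.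
rewrite -ltnNge => hlt.
move: hs; rewrite (bigD1 l) //= [X in _ = X](bigD1 l) //=.
have : (\sum_(i < L | i != l) a i <= \sum_(i < L | i != l) b i)%N.
  by apply: leq_sum => i _; apply: hle.
move=> h1 h2; have := leq_add hlt h1; by rewrite addSn h2 ltnn.
Qed.

Lemma greedy_half (Rs O : {set 'I_N}) : JGS_output F S r Rs ->
  (forall l, (#|O :&: S l| <= r l)%N) -> F O <= 2 * F Rs - F set0.
Proof.
case=> s [hsize hstep eR] hO; subst Rs.
case: (pickP (@predT 'I_N)) => [x0 _|hT]; last first.
  have e : forall A : {set 'I_N}, A = set0.
    by move=> A; apply/setP => x; have := hT x.
  rewrite (e O) (e [set x in s]); lra.
set Rs := [set x in s].
have hpre : forall p q, s = p ++ q ->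
    uniq p /\ forall l, (#|[set x in p] :&: S l| <= r l)%N.
  elim/last_ind => [|p t IH] q hs.
    split => // l; have -> : [set x in [::]] :&: S l = set0 :> {set 'I_N}.
      by apply/setP => x; rewrite !inE.
    by rewrite cards0.
  have hs' : s = p ++ t :: q by rewrite hs cat_rcons.
  have [up hp] := IH (t :: q) hs'.
  have [hc _] := hstep p q t hs'.
  case/bigcupP: hc => l' hl'; rewrite inE => /andP [htnR htl'].
  rewrite inE in htnR.
  split; first by rewrite rcons_uniq up htnR.
  move=> l.
  case htl: (t \in S l); last first.
    have -> : [set x in rcons p t] :&: S l = [set x in p] :&: S l.
      apply/setP => x; rewrite !inE mem_rcons ?in_cons.
      by case: (eqVneq x t) => [->|] //=; rewrite htl !andbF.
    exact: hp.
  have -> : [set x in rcons p t] :&: S l = t |: ([set x in p] :&: S l).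
    apply/setP => x; rewrite !inE mem_rcons ?in_cons.
    by case: (eqVneq x t) => [->|] //=; rewrite htl.
  rewrite cardsU1 !inE (negbTE htnR) /=.
  by rewrite -(same_group htl' htl).
have [us hcard] := hpre s [::] (esym (cats0 s)).
have hcardR : forall l, #|Rs :&: S l| = r l.
  apply: nat_sum_eq => //.
  rewrite -hsize.
  have : (#|Rs| = size s)%N by rewrite cardsE; apply/card_uniqP.
  move=> <-.
  have : ((\sum_(l < L) #|Rs :&: S l|)%N%:R : R) = #|Rs|%:R.
    rewrite natr_sum (_ : #|Rs|%:R = \sum_(i in Rs) (1:R)); last by rewrite sumr_const.
    rewrite (split_groups _ (fun i => i \in Rs) id) /=.
    apply: eq_bigr => l _; rewrite sumr_const.
    apply/eqP; rewrite eqr_nat; apply/eqP; apply: eq_card => i. by rewrite inE.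
  by move/eqP; rewrite eqr_nat => /eqP.
pose Pk k := [set x in take k s].
pose g k := F (Pk k.+1) - F (Pk k).
pose D o := F (Rs :|: [set o]) - F Rs.
have step : forall x, x \in s ->
    0 <= g (index x s) /\ forall o l, x \in S l -> o \in S l -> D o <= g (index x s).
  move=> x hx.
  set k := index x s.
  have hk : (k < size s)%N by rewrite index_mem.
  have hs : s = take k s ++ x :: drop k.+1 s.
    have hd := drop_nth x0 hk; rewrite (nth_index x0 hx) in hd.
    by rewrite -hd cat_take_drop.
  have [hc hmax] := hstep _ _ _ hs.
  have hPk1 : Pk k.+1 = Pk k :|: [set x].
    rewrite /Pk (take_nth x0 hk) (nth_index x0 hx).
    by apply/setP => y; rewrite !inE mem_rcons ?in_cons orbC.
  have hg : 0 <= g k.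
    by rewrite /g hPk1 subr_ge0; apply: mono; apply: subsetUl.
  split => // o l hxl hol.
  have sub : Pk k \subset Rs.
    by apply/subsetP => y; rewrite !inE; apply: mem_take.
  apply: le_trans (D1 _ _ o sub) _.
  case: (boolP (o \in Pk k)) => ho.
    by rewrite (setUidPl _) ?sub1set // subrr.
  rewrite /g hPk1.
  have hoc : o \in JGS_cand S r (Pk k).
    case/bigcupP: hc => l' hl'; rewrite inE => /andP [_ hxl'].
    have el := same_group hxl' hxl; subst l'.
    apply/bigcupP; exists l => //; by rewrite inE ho hol.
  have := hmax o hoc.
  rewrite /Pk; lra.
have h1 : F O <= F (Rs :|: O) by apply: mono; apply: subsetUr.
have h2 := D2' Rs O.
have h3 : \sum_(o in O) D o <= \sum_(x in Rs) g (index x s).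
  rewrite (split_groups _ (fun o => o \in O) id) (split_groups _ (fun o => o \in Rs) id).
  apply: ler_sum => l _ /=.
  have -> : \sum_(o | (o \in O) && (o \in S l)) D o = \sum_(o in O :&: S l) D o.
    by apply: eq_bigl => o; rewrite in_setI.
  have -> : \sum_(o | (o \in Rs) && (o \in S l)) g (index o s) = \sum_(o in Rs :&: S l) g (index o s).
    by apply: eq_bigl => o; rewrite in_setI.
  apply: avg_le.
  - by rewrite hcardR.
  - move=> o x; rewrite !inE => /andP [_ hol] /andP [hx hxl].
    by have [_ h] := step x hx; apply: h hxl hol.
  - by move=> o _; rewrite /D subr_ge0; apply: mono; apply: subsetUl.
  - by move=> x; rewrite !inE => /andP [hx _]; have [] := step x hx.
have h4 : \sum_(x in Rs) g (index x s) = F Rs - F set0.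
  rewrite (eq_bigl (fun x => x \in s)); last by move=> x; rewrite inE.
  rewrite -big_uniq // (big_nth x0).
  rewrite (eq_big_nat _ _ (F2 := fun k => g k)); last first.
    by move=> k /andP [_ hk]; rewrite index_uniq.
  rewrite telescope_sumr // /Pk take_size take0.
  have -> : [set x in [::]] = set0 :> {set 'I_N} by apply/setP => y; rewrite !inE.
  by [].
lra.
Qed.
End Greedy.

Section PS.
Variables (R : realType) (N : nat) (a : 'I_N -> 'I_N -> R).
Hypothesis ha : forall i j, 0 <= a i j.
Definition PS (X : {set 'I_N}) := \sum_(i in X) \sum_(j in X) a i j.

Lemma ps_if (X : {set 'I_N}) : PS X = \sum_i \sum_j (if (i \in X) && (j \in X) then a i j else 0).
Proof.
rewrite /PS big_mkcond; apply: eq_bigr => i _; case: (i \in X) => /=.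
  by rewrite big_mkcond.
by rewrite big1.
Qed.

Lemma ps_super (X Y : {set 'I_N}) : PS X + PS Y <= PS (X :|: Y) + PS (X :&: Y).
Proof.
rewrite !ps_if -!big_split; apply: ler_sum => i _; rewrite -!big_split /=.
apply: ler_sum => j _; rewrite !inE.
have := ha i j.
by case: (i \in X); case: (i \in Y); case: (j \in X); case: (j \in Y) => /=; lra.
Qed.

Lemma ps_mono (X Y : {set 'I_N}) : X \subset Y -> PS X <= PS Y.
Proof.
move=> sXY; rewrite !ps_if; apply: ler_sum => i _; apply: ler_sum => j _.
have := ha i j.
case hi: (i \in X); case hj: (j \in X) => /=;
  rewrite ?(subsetP sXY i hi) ?(subsetP sXY j hj) /=; try lra;
  case: ifP => _; lra.
Qed.
End PS.

Theorem theorem3 (R : realType) (K N L : nat)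
  (g : 'I_N -> 'cV[R[i]]_K) (w : 'I_N -> R)
  (S : 'I_L -> {set 'I_N}) (r : 'I_L -> nat)
  (Rstar Topt : {set 'I_N}) :
  (forall i, g i != 0) ->
  (forall i, 0 <= w i) ->
  (forall l1 l2, l1 != l2 -> [disjoint S l1 & S l2]) ->
  (\bigcup_(l < L) S l = [set: 'I_N]) ->
  (forall l, (r l <= #|S l|)%N) ->
  (exists l, r l != 0%N) ->
  JGS_output (WFC g w) S r Rstar ->
  (forall l, #|Topt :&: S l| = (#|S l| - r l)%N) ->
  (forall T : {set 'I_N}, (forall l, #|T :&: S l| = (#|S l| - r l)%N) ->
     WFP g w Topt <= WFP g w T) ->
  0 < WFP g w Topt ->
  WFP g w (~: Rstar) <=
    2^-1 * (1 + WFP g w [set: 'I_N] / WFP g w Topt) * WFP g w Topt.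
Proof.
move=> _ hw hdisj hcover hrS _ hJ hTopt _ hpos.
pose a := fun i j => w i * w j * csqabs (cinner (g i) (g j)) / (csqnorm (g i) * csqnorm (g j)).
have ha : forall i j, 0 <= a i j.
  move=> i j; rewrite /a; apply: divr_ge0; first apply: mulr_ge0.
  - by apply: mulr_ge0.
  - by rewrite /csqabs addr_ge0 // sqr_ge0.
  - by apply: mulr_ge0; apply: sumr_ge0 => k _; rewrite /csqabs addr_ge0 // sqr_ge0.
have eP : forall X, WFP g w X = @PS R N a X by [].
have submodF : forall A B, WFC g w (A :|: B) + WFC g w (A :&: B) <= WFC g w A + WFC g w B.
  move=> A B; rewrite /WFC !eP setCU setCI; have := ps_super _ _ _ ha (~: A) (~: B); lra.
have monoF : forall A B : {set 'I_N}, A \subset B -> WFC g w A <= WFC g w B.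
  move=> A B sAB; rewrite /WFC !eP.
  have := ps_mono _ _ _ ha (~: B) (~: A); rewrite setCS => /(_ sAB); lra.
have hO : forall l, (#|~: Topt :&: S l| <= r l)%N.
  move=> l; have e : ~: Topt :&: S l = S l :\: Topt by rewrite setDE setIC.
  rewrite e; have := cardsID Topt (S l); have := hTopt l; rewrite setIC.
  have := hrS l; lia.
have := greedy_half _ _ _ _ _ _ submodF monoF hdisj hcover _ _ hJ hO.
rewrite /WFC !eP setCK setC0 subrr.
rewrite -!eP.
have hne : WFP g w Topt != 0 by rewrite gt_eqF.
have -> : 2^-1 * (1 + WFP g w [set: 'I_N] / WFP g w Topt) * WFP g w Topt
  = (WFP g w Topt + WFP g w [set: 'I_N]) / 2 by field.
lra.
Qed.
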